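(* Let $S_\alpha=(\mathrm{Id}_n+W_\alpha V_\alpha)\cdots(\mathrm{Id}_n+W_1V_1)Z$ for $1\le\alpha\le d$ and $k\ge1$. With the convention $\dot F=\{H,F\}$ and $H=\operatorname{tr}S_\alpha^k$, the vector field on $\mathcal M^\times_{n,d,q}$ induced by the quasi-Poisson bracket is $\dot X=-kXS_\alpha^k$, $\dot Z=k(S_\alpha^kZ-ZS_\alpha^k)$, $\dot V_\beta=-kV_\beta S_\alpha^k$ and $\dot W_\beta=kS_\alpha^kW_\beta$ for $\beta\le\alpha$, $\dot V_\beta=0$ and $\dot W_\beta=0$ for $\beta>\alpha$; moreover $\dot S_\alpha=0$.
   Context: Fix integers $n\ge1$, $d\ge1$ and $q\in\mathbb C^\times$ not a root of unity. Greek indices range over $\{1,\dots,d\}$; set $o(\alpha,\beta)=0$ if $\alpha=\beta$, $o(\alpha,\beta)=1$ if $\alpha<\beta$, $o(\alpha,\beta)=-1$ if $\alpha>\beta$. Let $\mathcal M^\times_{n,d,q}$ be the affine variety of tuples $(X,Z,V_1,\dots,V_d,W_1,\dots,W_d)$ with $X,Z\in\mathrm{GL}_n(\mathbb C)$, $V_\alpha\in\mathrm{Mat}_{1\times n}(\mathbb C)$, $W_\alpha\in\mathrm{Mat}_{n\times 1}(\mathbb C)$, such that every $\mathrm{Id}_n+W_\alpha V_\alpha$ is invertible and $XZX^{-1}Z^{-1}(\mathrm{Id}_n+W_1V_1)^{-1}\cdots(\mathrm{Id}_n+W_dV_d)^{-1}=q\,\mathrm{Id}_n$. Write $V_{\alpha,j}$,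 $W_{\alpha,k}$ for the entries. Let $\{-,-\}$ be the antisymmetric biderivation on functions of $(X,Z,V_\alpha,W_\alpha)$ (Van den Bergh's quasi-Poisson bracket) given by $\{X_{ij},X_{kl}\}=\tfrac12(\delta_{il}(X^2)_{kj}-\delta_{kj}(X^2)_{il})$, $\{Z_{ij},Z_{kl}\}=\tfrac12(\delta_{kj}(Z^2)_{il}-\delta_{il}(Z^2)_{kj})$, $\{X_{ij},Z_{kl}\}=\tfrac12((ZX)_{kj}\delta_{il}+\delta_{kj}(XZ)_{il}+Z_{kj}X_{il}-X_{kj}Z_{il})$, $\{U_{ij},W_{\alpha,k}\}=\tfrac12(\delta_{kj}(UW_\alpha)_i-U_{kj}W_{\alpha,i})$, $\{U_{ij},V_{\alpha,l}\}=\tfrac12((V_\alpha U)_j\delta_{il}-V_{\alpha,j}U_{il})$ for $U\in\{X,Z\}$, $\{V_{\alpha,j},V_{\beta,l}\}=\tfrac12 o(\beta,\alpha)(V_{\beta,j}V_{\alpha,l}+V_{\alpha,j}V_{\beta,l})$, $\{W_{\alpha,i},W_{\beta,k}\}=\tfrac12 o(\beta,\alpha)(W_{\beta,k}W_{\alpha,i}+W_{\alpha,k}W_{\beta,i})$, $\{V_{\alpha,j},W_{\beta,k}\}=\delta_{\alpha\beta}(\delta_{kj}+\tfrac12W_{\alpha,k}V_{\alpha,j}+\tfrac12\delta_{kj}V_\alpha W_\alpha)+\tfrac12 o(\alpha,\beta)(\delta_{kj}V_\alpha W_\beta+W_{\beta,k}V_{\alpha,j})$. The vector field of $H$ is $\dot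 M_{ij}=\{H,M_{ij}\}$ for each matrix entry $M_{ij}$. *)

(* Defs.v *)
From HB Require Import structures.
From mathcomp Require Import all_boot all_order all_algebra.
Set Implicit Arguments. Unset Strict Implicit. Unset Printing Implicit Defensive.
Import Order.TTheory GRing.Theory Num.Theory.
Local Open Scope ring_scope.

(* A point (X, Z, V_1..V_d, W_1..W_d) with entries in a commutative ring T.
   Greek indices 1..d are represented by 'I_d (0-based, same order). *)
Record pt (T : comNzRingType) (n d : nat) := Pt {
  pX : 'M[T]_n; pZ : 'M[T]_n;
  pV : 'I_d -> 'rV[T]_n; pW : 'I_d -> 'cV[T]_n }.

Definition coord (n d : nat) : finType :=
  (((('I_n * 'I_n) + ('I_n * 'I_n)) + ('I_d * 'I_n)) + ('I_d * 'I_n))%type.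
Definition cX n d (i j : 'I_n) : coord n d := inl (inl (inl (i, j))).
Definition cZ n d (i j : 'I_n) : coord n d := inl (inl (inr (i, j))).
Definition cV n d (a : 'I_d) (j : 'I_n) : coord n d := inl (inr (a, j)).
Definition cW n d (a : 'I_d) (k : 'I_n) : coord n d := inr (a, k).
Arguments cX {n d}. Arguments cZ {n d}. Arguments cV {n d}. Arguments cW {n d}.

Definition coordv (T : comNzRingType) n d (P : pt T n d) (c : coord n d) : T :=
  match c with
  | inl (inl (inl (i, j))) => pX P i j
  | inl (inl (inr (i, j))) => pZ P i j
  | inl (inr (a, j)) => pV P a 0 j
  | inr (a, k) => pW P a k 0
  end.

Definition mxpow (T : comNzRingType) n (A : 'M[T]_n) (k : nat) : 'M[T]_n :=
  iter k (mulmx A) 1%:M.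

Definition IWV (T : comNzRingType) n d (P : pt T n d) (a : 'I_d) : 'M[T]_n :=
  1%:M + pW P a *m pV P a.

(* S_a = (Id + W_a V_a) ... (Id + W_1 V_1) Z *)
Definition Smx (T : comNzRingType) n d (P : pt T n d) (a : 'I_d) : 'M[T]_n :=
  foldl (fun acc (b : 'I_d) => IWV P b *m acc) (pZ P) [seq b <- enum 'I_d | (val b <= val a)%N].

Definition in_Mx (R : fieldType) n d (q : R) (P : pt R n d) : Prop :=
  [/\ pX P \in unitmx, pZ P \in unitmx, (forall a, IWV P a \in unitmx) &
   foldl (fun acc (b : 'I_d) => acc *m invmx (IWV P b))
     (pX P *m pZ P *m invmx (pX P) *m invmx (pZ P)) (enum 'I_d) = q%:M ].

(* A polynomial function on points, given uniformly over all commutative rings *)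
Definition ptfun n d := forall T : comNzRingType, pt T n d -> T.

Definition shift (R : comNzRingType) n d (P : pt R n d) (c : coord n d)
  : pt {poly R} n d :=
  Pt (\matrix_(i, j) ((pX P i j)%:P + (if c == cX i j then 'X else 0)))
     (\matrix_(i, j) ((pZ P i j)%:P + (if c == cZ i j then 'X else 0)))
     (fun a => \row_j ((pV P a 0 j)%:P + (if c == cV a j then 'X else 0)))
     (fun a => \col_k ((pW P a k 0)%:P + (if c == cW a k then 'X else 0))).

(* partial derivative dF/dc at P: the coefficient of t in F(P + t e_c) *)
Definition pder (R : comNzRingType) n d (F : ptfun n d) (c : coord n d)
  (P : pt R n d) : R := (F _ (shift P c))`_1.

Definition osgn (R : comNzRingType) d (a b : 'I_d) : R :=
  if (a < b)%N then 1 else if (b < a)%N then -1 else 0.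

Definition kd (R : comNzRingType) m (i j : 'I_m) : R := (i == j)%:R.
Arguments kd {R m}. Arguments osgn {R d}.

(* Van den Bergh's quasi-Poisson bracket on pairs of coordinate functions,
   evaluated at P *)
Definition brc (R : fieldType) n d (P : pt R n d) (c c' : coord n d) : R :=
  let X := pX P in let Z := pZ P in let V := pV P in let W := pW P in
  let h : R := 2^-1 in
  let bUW (U : 'M[R]_n) (i j : 'I_n) (a : 'I_d) (k : 'I_n) : R :=
      h * (kd k j * (U *m W a) i 0 - U k j * W a i 0) in
  let bUV (U : 'M[R]_n) (i j : 'I_n) (a : 'I_d) (l : 'I_n) : R :=
      h * ((V a *m U) 0 j * kd i l - V a 0 j * U i l) in
  let bXZ (i j k l : 'I_n) : R := h * ((Z *m X) k j * kd i l + kd k j * (X *m Z) i l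
                          + Z k j * X i l - X k j * Z i l) in
  let bVW (a : 'I_d) (j : 'I_n) (b : 'I_d) (k : 'I_n) : R := kd a b * (kd k j + h * W a k 0 * V a 0 j
                                + h * kd k j * (V a *m W a) 0 0)
                     + h * osgn a b * (kd k j * (V a *m W b) 0 0
                                        + W b k 0 * V a 0 j) in
  match c, c' with
  | inl (inl (inl (i, j))), inl (inl (inl (k, l))) =>
      h * (kd i l * (X *m X) k j - kd k j * (X *m X) i l)
  | inl (inl (inr (i, j))), inl (inl (inr (k, l))) =>
      h * (kd k j * (Z *m Z) i l - kd i l * (Z *m Z) k j)
  | inl (inl (inl (i, j))), inl (inl (inr (k, l))) => bXZ i j k l
  | inl (inl (inr (k, l))), inl (inl (inl (i, j))) => - bXZ i j k l
  | inl (inl (inl (i, j))), inr (a, k) => bUW X i j a k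
  | inr (a, k), inl (inl (inl (i, j))) => - bUW X i j a k
  | inl (inl (inr (i, j))), inr (a, k) => bUW Z i j a k
  | inr (a, k), inl (inl (inr (i, j))) => - bUW Z i j a k
  | inl (inl (inl (i, j))), inl (inr (a, l)) => bUV X i j a l
  | inl (inr (a, l)), inl (inl (inl (i, j))) => - bUV X i j a l
  | inl (inl (inr (i, j))), inl (inr (a, l)) => bUV Z i j a l
  | inl (inr (a, l)), inl (inl (inr (i, j))) => - bUV Z i j a l
  | inl (inr (a, j)), inl (inr (b, l)) =>
      h * osgn b a * (V b 0 j * V a 0 l + V a 0 j * V b 0 l)
  | inr (a, i), inr (b, k) =>
      h * osgn b a * (W b k 0 * W a i 0 + W a k 0 * W b i 0)
  | inl (inr (a, j)), inr (b, k) => bVW a j b k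
  | inr (b, k), inl (inr (a, j)) => - bVW a j b k
  end.

(* {F, G}(P) for polynomial functions F, G, extended as a biderivation *)
Definition qpb (R : fieldType) n d (F G : ptfun n d) (P : pt R n d) : R :=
  \sum_(c : coord n d) \sum_(c' : coord n d)
     pder F c P * pder G c' P * brc P c c'.

Definition cfun n d (c : coord n d) : ptfun n d := fun T P => coordv P c.

Definition Ham n d (a : 'I_d) (k : nat) : ptfun n d :=
  fun T P => \tr (mxpow (Smx P a) k).

Definition Sentry n d (a : 'I_d) (i j : 'I_n) : ptfun n d :=
  fun T P => Smx P a i j.

(* Main.v *)
Require Import Defs.
From HB Require Import structures.
From mathcomp Require Import all_boot all_order all_algebra.
Import Order.TTheory GRing.Theory Num.Theory.
Local Open Scope ring_scope.
From mathcomp Require Import ring.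
Set Implicit Arguments. Unset Strict Implicit. Unset Printing Implicit Defensive.
Local Notation coord := Defs.coord.

Section Poly.
Variable R : comNzRingType.

Definition m0 p q (A : 'M[{poly R}]_(p,q)) : 'M[R]_(p,q) := \matrix_(i,j) (A i j)`_0.
Definition m1 p q (A : 'M[{poly R}]_(p,q)) : 'M[R]_(p,q) := \matrix_(i,j) (A i j)`_1.

Lemma m0M p q r (A : 'M[{poly R}]_(p,q)) (B : 'M[{poly R}]_(q,r)) :
  m0 (A *m B) = m0 A *m m0 B.
Proof.
apply/matrixP=> i j; rewrite !mxE coef_sum; apply: eq_bigr => l _.
by rewrite !mxE coef0M.
Qed.

Lemma m1M p q r (A : 'M[{poly R}]_(p,q)) (B : 'M[{poly R}]_(q,r)) :
  m1 (A *m B) = m0 A *m m1 B + m1 A *m m0 B.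
Proof.
apply/matrixP=> i j; rewrite !mxE coef_sum -big_split /=; apply: eq_bigr => l _.
by rewrite !mxE coefM !big_ord_recr big_ord0 /= add0r addrC.
Qed.

Lemma m0D p q (A B : 'M[{poly R}]_(p,q)) : m0 (A + B) = m0 A + m0 B.
Proof. by apply/matrixP=> i j; rewrite !mxE coefD. Qed.
Lemma m1D p q (A B : 'M[{poly R}]_(p,q)) : m1 (A + B) = m1 A + m1 B.
Proof. by apply/matrixP=> i j; rewrite !mxE coefD. Qed.
Lemma m0_1 p : m0 (1%:M : 'M[{poly R}]_p) = 1%:M.
Proof. by apply/matrixP=> i j; rewrite !mxE coefMn coefC. Qed.
Lemma m1_1 p : m1 (1%:M : 'M[{poly R}]_p) = 0.
Proof. by apply/matrixP=> i j; rewrite !mxE coefMn coefC /= mul0rn. Qed.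

Definition DF (I : Type) n (f df : I -> 'M[R]_n) (s : seq I) (p : 'M[R]_n * 'M[R]_n) :=
  foldl (fun p b => (f b *m p.1, f b *m p.2 + df b *m p.1)) p s.

Lemma m_foldl (I : Type) n (g : I -> 'M[{poly R}]_n) f df s z :
  (forall b, m0 (g b) = f b) -> (forall b, m1 (g b) = df b) ->
  (m0 (foldl (fun acc b => g b *m acc) z s), m1 (foldl (fun acc b => g b *m acc) z s))
  = DF f df s (m0 z, m1 z).
Proof.
move=> h0 h1; elim: s z => [|b s IH] z //=.
by rewrite IH m0M m1M h0 h1.
Qed.

End Poly.


Section Pow.
Variable R : comNzRingType.
Variable n : nat.
Implicit Types A B : 'M[R]_n.

Lemma mxpowS A k : mxpow A k.+1 = A *m mxpow A k. Proof. by []. Qed.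
Lemma mxpow0 A : mxpow A 0 = 1%:M. Proof. by []. Qed.
Lemma mxpowD A i j : mxpow A (i + j) = mxpow A i *m mxpow A j.
Proof. elim: i => [|i IH]; first by rewrite mul1mx. by rewrite addSn !mxpowS IH mulmxA. Qed.
Lemma mxpowSr A k : mxpow A k.+1 = mxpow A k *m A.
Proof. by rewrite -addn1 mxpowD /= mulmx1. Qed.
Lemma mxpow_comm A k : A *m mxpow A k = mxpow A k *m A.
Proof. by rewrite -mxpowS mxpowSr. Qed.
End Pow.

Section PolyPow.
Variable R : comNzRingType.
Variable n : nat.

Lemma m0_pow (M : 'M[{poly R}]_n) k : m0 (mxpow M k) = mxpow (m0 M) k.
Proof. elim: k => [|k IH] /=; first exact: m0_1. by rewrite m0M IH. Qed.

Lemma tr_m1_pow (M : 'M[{poly R}]_n) k j :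
  \tr (mxpow (m0 M) j *m m1 (mxpow M k.+1)) = k.+1%:R * \tr (m1 M *m mxpow (m0 M) (j + k)).
Proof.
elim: k j => [|k IH] j.
  rewrite /= m1M m1_1 mulmx0 add0r m0_1 mulmx1 addn0 mxtrace_mulC.
  by rewrite mul1r.
rewrite (mxpowS M k.+1) m1M m0_pow mulmxDr mxtraceD mulmxA -(mxpowSr (m0 M) j) IH.
have -> : \tr (mxpow (m0 M) j *m (m1 M *m mxpow (m0 M) k.+1)) = \tr (m1 M *m mxpow (m0 M) (j.+1+k)).
  rewrite mulmxA mxtrace_mulC mulmxA -mxpowD mxtrace_mulC.
  by rewrite addSn addnC.
have -> : (j + k.+1 = j.+1 + k)%N by rewrite addnS.
by rewrite [in RHS]mulrSr mulrDl mul1r.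
Qed.

Lemma coef1_tr (M : 'M[{poly R}]_n) : (\tr M)`_1 = \tr (m1 M).
Proof. by rewrite /mxtrace coef_sum; apply: eq_bigr => i _; rewrite mxE. Qed.

Lemma pder_pow (M : 'M[{poly R}]_n) k : (0 < k)%N ->
  (\tr (mxpow M k))`_1 = k%:R * \tr (m1 M *m mxpow (m0 M) k.-1).
Proof.
case: k => // k _; rewrite coef1_tr -[m1 _]mul1mx -(mxpow0 (m0 M)) tr_m1_pow.
by [].
Qed.
End PolyPow.


Section Pt.
Variable R : comNzRingType.
Variables n d : nat.
Implicit Types (P : pt R n d) (c : coord n d).

Definition ptU c : pt R n d :=
  Pt (\matrix_(i, j) (c == cX i j)%:R) (\matrix_(i, j) (c == cZ i j)%:R)
     (fun a => \row_j (c == cV a j)%:R) (fun a => \col_k (c == cW a k)%:R).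

Definition ptY (y : coord n d -> R) : pt R n d :=
  Pt (\matrix_(i, j) y (cX i j)) (\matrix_(i, j) y (cZ i j))
     (fun a => \row_j y (cV a j)) (fun a => \col_k y (cW a k)).

Definition sa (a : 'I_d) := [seq b <- enum 'I_d | (val b <= val a)%N].

Definition dFb P T (b : 'I_d) := pW T b *m pV P b + pW P b *m pV T b.

Definition DS P T a := (DF (IWV P) (dFb P T) (sa a) (pZ P, pZ T)).2.

Lemma coef_sh0 (x : R) (b : bool) : (x%:P + (if b then 'X else 0))`_0 = x.
Proof. by case: b; rewrite !coefD !coefC ?coefX ?coef0 /= ?addr0 ?add0r. Qed.
Lemma coef_sh1 (x : R) (b : bool) : (x%:P + (if b then 'X else 0))`_1 = b%:R.
Proof. by case: b; rewrite !coefD !coefC ?coefX ?coef0 /= ?addr0 ?add0r. Qed.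

Lemma m0_shZ P c : m0 (pZ (shift P c)) = pZ P.
Proof. by apply/matrixP=> i j; rewrite !mxE ?coef_sh0 ?coef_sh1. Qed.
Lemma m1_shZ P c : m1 (pZ (shift P c)) = pZ (ptU c).
Proof. by apply/matrixP=> i j; rewrite !mxE ?coef_sh0 ?coef_sh1. Qed.
Lemma m0_shV P c b : m0 (pV (shift P c) b) = pV P b.
Proof. by apply/matrixP=> i j; rewrite (ord1 i) !mxE ?coef_sh0 ?coef_sh1. Qed.
Lemma m1_shV P c b : m1 (pV (shift P c) b) = pV (ptU c) b.
Proof. by apply/matrixP=> i j; rewrite (ord1 i) !mxE ?coef_sh0 ?coef_sh1. Qed.
Lemma m0_shW P c b : m0 (pW (shift P c) b) = pW P b.
Proof. by apply/matrixP=> i j; rewrite (ord1 j) !mxE ?coef_sh0 ?coef_sh1. Qed.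
Lemma m1_shW P c b : m1 (pW (shift P c) b) = pW (ptU c) b.
Proof. by apply/matrixP=> i j; rewrite (ord1 j) !mxE ?coef_sh0 ?coef_sh1. Qed.

Lemma Smx_sh P c a :
  (m0 (Smx (shift P c) a), m1 (Smx (shift P c) a)) =
  (DF (IWV P) (dFb P (ptU c)) (sa a) (pZ P, pZ (ptU c))).
Proof.
rewrite /Smx (@m_foldl _ _ _ _ (IWV P) (dFb P (ptU c))) ?m0_shZ ?m1_shZ // => b; rewrite /IWV.
  by rewrite m0D m0M m0_1 m0_shV m0_shW.
by rewrite m1D m1M m1_1 add0r m0_shV m0_shW m1_shV m1_shW addrC.
Qed.

Lemma DF1 (I : Type) m (f df : I -> 'M[R]_m) s z dz :
  (DF f df s (z, dz)).1 = foldl (fun acc b => f b *m acc) z s.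
Proof. by elim: s z dz => [|b s IH] z dz //=; rewrite IH. Qed.

Lemma DS_sh P c a : m1 (Smx (shift P c) a) = DS P (ptU c) a.
Proof. by rewrite /DS -Smx_sh. Qed.
Lemma Smx_sh0 P c a : m0 (Smx (shift P c) a) = Smx P a.
Proof. by have /(congr1 fst) /= -> := Smx_sh P c a; rewrite DF1. Qed.

Lemma coordv_sh P c c0 :
  coordv (shift P c) c0 = (coordv P c0)%:P + (if c == c0 then 'X else 0).
Proof. by case: c0 => [[[[i j]|[i j]]|[a j]]|[a j]] /=; rewrite !mxE. Qed.

Lemma pder_cfun P c c0 : pder (cfun c0) c P = (c == c0)%:R.
Proof. by rewrite /pder /cfun coordv_sh coef_sh1. Qed.

Lemma pder_Ham P a k c : (0 < k)%N ->
  pder (Ham a k) c P = k%:R * \tr (DS P (ptU c) a *m mxpow (Smx P a) k.-1).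
Proof. by move=> hk; rewrite /pder /Ham pder_pow // DS_sh Smx_sh0. Qed.

Lemma pder_Sentry P a i j c : pder (Sentry a i j) c P = DS P (ptU c) a i j.
Proof. by rewrite /pder /Sentry -DS_sh mxE. Qed.

Lemma sum_pick (y : coord n d -> R) x : \sum_c y c * (c == x)%:R = y x.
Proof.
rewrite (bigD1 x) //= eqxx mulr1 big1 ?addr0 // => c /negbTE ->; by rewrite mulr0.
Qed.

Lemma DF_lin (I : Type) m (f : I -> 'M[R]_m) (J : finType) (y : J -> R) dfs dzs s z :
  (DF f (fun b => \sum_c y c *: dfs c b) s (z, \sum_c y c *: dzs c)).2
  = \sum_c y c *: (DF f (dfs c) s (z, dzs c)).2.
Proof.
elim: s z dzs => [|b s IH] z dzs //=.
have -> : f b *m (\sum_c y c *: dzs c) + (\sum_c y c *: dfs c b) *m z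
   = \sum_c y c *: (f b *m dzs c + dfs c b *m z).
  rewrite mulmx_sumr mulmx_suml -big_split /=; apply: eq_bigr => c _.
  by rewrite scalerDr scalemxAr scalemxAl.
by rewrite IH.
Qed.

Lemma DF_eq (I : Type) m (f df df' : I -> 'M[R]_m) s p :
  (forall b, df b = df' b) -> DF f df s p = DF f df' s p.
Proof. by move=> h; elim: s p => [|b s IH] p //=; rewrite IH h. Qed.

Lemma sumU_Z (y : coord n d -> R) : \sum_c y c *: pZ (ptU c) = pZ (ptY y).
Proof.
apply/matrixP=> i j; rewrite summxE !mxE -[RHS](sum_pick y).
by apply: eq_bigr => c _; rewrite !mxE.
Qed.
Lemma sumU_V (y : coord n d -> R) b : \sum_c y c *: pV (ptU c) b = pV (ptY y) b.
Proof.
apply/matrixP=> i j; rewrite summxE !mxE -[RHS](sum_pick y).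
by apply: eq_bigr => c _; rewrite !mxE.
Qed.
Lemma sumU_W (y : coord n d -> R) b : \sum_c y c *: pW (ptU c) b = pW (ptY y) b.
Proof.
apply/matrixP=> i j; rewrite summxE !mxE -[RHS](sum_pick y).
by apply: eq_bigr => c _; rewrite !mxE.
Qed.

Lemma DS_lin P a (y : coord n d -> R) :
  \sum_c y c *: DS P (ptU c) a = DS P (ptY y) a.
Proof.
rewrite /DS -(@DF_lin _ _ (IWV P) _ y (fun c => dFb P (ptU c)) (fun c => pZ (ptU c))).
rewrite sumU_Z (@DF_eq _ _ _ _ (dFb P (ptY y))) // => b.
rewrite /dFb -sumU_V -sumU_W mulmx_suml mulmx_sumr -big_split /=.
by apply: eq_bigr => c _; rewrite scalerDr scalemxAl scalemxAr.
Qed.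
End Pt.


Section Q.
Variable R : fieldType.
Variables n d : nat.
Implicit Types (P : pt R n d) (c : coord n d).

Lemma qpb_cfun0 P (H : ptfun n d) c0 :
  qpb H (cfun c0) P = \sum_c pder H c P * brc P c c0.
Proof.
rewrite /qpb; apply: eq_bigr => c _; rewrite (bigD1 c0) //= pder_cfun eqxx mulr1.
rewrite big1 ?addr0 // => c' ne; by rewrite pder_cfun (negbTE ne) mulr0 mul0r.
Qed.

Lemma tr_sum (I : finType) (M : I -> 'M[R]_n) : \tr (\sum_i M i) = \sum_i \tr (M i).
Proof. by rewrite /mxtrace exchange_big; apply: eq_bigr => i _; rewrite summxE. Qed.

Lemma qpb_Ham_cfun P a k c0 : (0 < k)%N ->
  qpb (Ham a k) (cfun c0) P =
  k%:R * \tr (DS P (ptY (fun c => brc P c c0)) a *m mxpow (Smx P a) k.-1).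
Proof.
move=> hk; rewrite qpb_cfun0 -DS_lin mulmx_suml tr_sum mulr_sumr.
apply: eq_bigr => c _; rewrite pder_Ham // -scalemxAl mxtraceZ.
by rewrite mulrCA mulrC mulrA.
Qed.

Lemma qpb_Ham_S P a k i j :
  qpb (Ham a k) (Sentry a i j) P =
  DS P (ptY (fun c => qpb (Ham a k) (cfun c) P)) a i j.
Proof.
rewrite -DS_lin summxE {1}/qpb exchange_big /=; apply: eq_bigr => c' _.
rewrite mxE qpb_cfun0 mulr_suml pder_Sentry; apply: eq_bigr => c _.
by rewrite mulrAC.
Qed.
End Q.


Section Inv.
Variable R : comNzRingType.

Lemma DF_inv (I : Type) m (idx : I -> nat) (f df : I -> 'M[R]_m) (Bm : nat -> 'M[R]_m) B' s k z dz :
  map idx s = iota k (size s) ->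
  (forall b, (idx b < k + size s)%N -> df b = Bm (idx b).+1 *m f b - f b *m Bm (idx b)) ->
  dz = Bm k *m z - z *m B' ->
  (DF f df s (z,dz)).2 = Bm (k + size s)%N *m (DF f df s (z,dz)).1 - (DF f df s (z,dz)).1 *m B'.
Proof.
elim: s k z dz => [|b s IH] k z dz.
  by move=> _ _ ->; rewrite addn0.
rewrite /= => -[hb hs] hdf hdz; rewrite -addSnnS; apply: IH => //.
  by move=> b' hb'; apply hdf; move: hb'; rewrite addnS addSn.
rewrite hdf hb ?addnS ?ltnS ?leq_addr // hdz.
rewrite mulmxBr mulmxBl !mulmxA addrC -addrA addKr.
by [].
Qed.

Lemma sa_val d (a : 'I_d) : map val (sa a) = iota 0 a.+1.
Proof.
have -> : map val (sa a) = filter (fun x => x <= a)%N (map val (enum 'I_d)) by rewrite filter_map.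
rewrite val_enum_ord.
have ha : (a.+1 <= d)%N := ltn_ord a.
have -> : iota 0 d = iota 0 a.+1 ++ iota (0 + a.+1) (d - a.+1) by rewrite -iotaD subnKC.
rewrite filter_cat.
rewrite (@eq_in_filter _ _ predT); last by move=> x; rewrite mem_iota add0n ltnS /=; move=> ->.
rewrite filter_predT (@eq_in_filter _ _ pred0) ?filter_pred0 ?cats0 //.
by move=> x; rewrite mem_iota add0n; case/andP => h _; rewrite leqNgt h.
Qed.

Lemma size_sa d (a : 'I_d) : size (sa a) = a.+1.
Proof. by rewrite -(size_map val) sa_val size_iota. Qed.
End Inv.


Section Alg.
Variable R : comNzRingType.

Lemma eD p q (A B : 'M[R]_(p,q)) i j : (A + B) i j = A i j + B i j. Proof. by rewrite mxE. Qed.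
Lemma eN p q (A : 'M[R]_(p,q)) i j : (- A) i j = - A i j. Proof. by rewrite mxE. Qed.
Lemma eZ p q (a : R) (A : 'M[R]_(p,q)) i j : (a *: A) i j = a * A i j. Proof. by rewrite mxE. Qed.
Lemma e1 p (i j : 'I_p) : (1%:M : 'M[R]_p) i j = (i == j)%:R. Proof. by rewrite mxE. Qed.
Lemma rk1 p q (A : 'M[R]_(p,1)) (B : 'M[R]_(1,q)) i j : (A *m B) i j = A i 0 * B 0 j.
Proof. by rewrite mxE big_ord1. Qed.

Variable n : nat.

Lemma LdF (A : 'M[R]_n) (W : 'cV[R]_n) (V : 'rV[R]_n) (c t : R) :
  (c *: (A *m W + t *: W)) *m V + W *m (- c *: (V *m A + t *: V))
  = (c *: A) *m (1%:M + W *m V) - (1%:M + W *m V) *m (c *: A).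
Proof.
rewrite mulmxDr mulmxDl mulmx1 mul1mx mulmxA -[(W *m V) *m _]mulmxA.
rewrite -!scalemxAl -!scalemxAr.
apply/matrixP=> k l; rewrite !(eD, eN, eZ, rk1); ring.
Qed.
End Alg.


Section Delta.
Variable R : comNzRingType.
Lemma eMd p q r (M : 'M[R]_(p,q)) (j : 'I_q) (i : 'I_r) k l :
  (M *m delta_mx j i) k l = M k j * (i == l)%:R.
Proof.
rewrite mxE (bigD1 j) //= mxE eqxx /= big1 ?addr0; last first.
  by move=> m /negbTE hm; rewrite mxE hm mulr0.
by rewrite eq_sym.
Qed.
Lemma edM p q r (N : 'M[R]_(q,r)) (j : 'I_p) (i : 'I_q) k l :
  (delta_mx j i *m N) k l = (k == j)%:R * N i l.
Proof.
rewrite mxE (bigD1 i) //= mxE eqxx andbT big1 ?addr0 //.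
by move=> m /negbTE hm; rewrite mxE hm andbF mul0r.
Qed.
Lemma eMdN p q r s (M : 'M[R]_(p,q)) (N : 'M[R]_(r,s)) (j : 'I_q) (i : 'I_r) k l :
  (M *m delta_mx j i *m N) k l = M k j * N i l.
Proof.
rewrite -mulmxA mxE (bigD1 j) //= edM eqxx mul1r big1 ?addr0 //.
by move=> m /negbTE hm; rewrite edM hm mul0r mulr0.
Qed.
Lemma edMN p q r s (M : 'M[R]_(q,r)) (N : 'M[R]_(r,s)) (j : 'I_p) (i : 'I_q) k l :
  (delta_mx j i *m M *m N) k l = (k == j)%:R * (M *m N) i l.
Proof. by rewrite -mulmxA edM. Qed.
Lemma tr_Md p q (M : 'M[R]_(p,q)) (j : 'I_q) (i : 'I_p) : \tr (M *m delta_mx j i) = M i j.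
Proof.
rewrite /mxtrace (bigD1 i) //= eMd eqxx mulr1 big1 ?addr0 //.
by move=> m hm; rewrite eMd eq_sym (negbTE hm) mulr0.
Qed.
End Delta.

Section Main.
Variable R : fieldType.
Hypothesis h2 : (2%:R : R) != 0.
Variables n d : nat.
Variable P : pt R n d.
Variable a : 'I_d.
Local Notation X := (pX P).
Local Notation Z := (pZ P).
Local Notation V := (pV P).
Local Notation W := (pW P).
Local Notation S := (Smx P a).

Lemma DS_formula T (Bm : nat -> 'M[R]_n) B' :
  (forall b : 'I_d, (b <= a)%N -> dFb P T b = Bm b.+1 *m IWV P b - IWV P b *m Bm b) ->
  pZ T = Bm 0%N *m Z - Z *m B' ->
  DS P T a = Bm a.+1 *m S - S *m B'.
Proof.
move=> hdf hz; rewrite /DS.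
have := @DF_inv R 'I_d n val (IWV P) (dFb P T) Bm B' (sa a) 0 Z (pZ T).
rewrite DF1 add0n size_sa; apply; first exact: sa_val.
  by move=> b; rewrite ltnS; apply: hdf.
exact: hz.
Qed.

Lemma trB p (A B : 'M[R]_p) : \tr (A - B) = \tr A - \tr B.
Proof. by rewrite /mxtrace -sumrB; apply: eq_bigr => i _; rewrite !mxE. Qed.

Lemma tr_formula (B B' : 'M[R]_n) k : (0 < k)%N ->
  \tr ((B *m S - S *m B') *m mxpow S k.-1) = \tr (mxpow S k *m (B - B')).
Proof.
case: k => // k _ /=.
rewrite mulmxBl trB mulmxBr trB.
congr (_ - _); first by rewrite -mulmxA mxtrace_mulC.
by rewrite mxtrace_mulC mulmxA -mxpowSr mxpowS.
Qed.

Lemma qpb_formula k c0 (Bm : nat -> 'M[R]_n) B' : (0 < k)%N ->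
  let T := ptY (fun c => brc P c c0) in
  (forall b : 'I_d, (b <= a)%N -> dFb P T b = Bm b.+1 *m IWV P b - IWV P b *m Bm b) ->
  pZ T = Bm 0%N *m Z - Z *m B' ->
  qpb (Ham a k) (cfun c0) P = k%:R * \tr (mxpow S k *m (Bm a.+1 - B')).
Proof.
move=> hk T hdf hz; rewrite qpb_Ham_cfun // (DS_formula hdf hz) tr_formula //.
Qed.


Lemma trN p (A : 'M[R]_p) : \tr (- A) = - \tr A.
Proof. by rewrite -sub0r trB mxtrace0 sub0r. Qed.

Lemma eCol m (f : 'I_m -> R) i j : (\col_k f k) i j = f i. Proof. by rewrite mxE. Qed.
Lemma eRow m (f : 'I_m -> R) i j : (\row_k f k) i j = f j. Proof. by rewrite mxE. Qed.
Ltac mnorm := do 3 rewrite ?(mulmxDl, mulmxDr, mulmxBl, mulmxBr, mulmxN, mulNmx, mulmx1, mul1mx) -?scalemxAl -?scalemxAr ?mulmxA.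
Lemma rk1A p q r (A : 'M[R]_(p,1)) (B : 'M[R]_(1,q)) (C : 'M[R]_(q,r)) i j :
  (A *m B *m C) i j = A i 0 * (B *m C) 0 j.
Proof. by rewrite -mulmxA rk1. Qed.
Ltac ent := rewrite ?(eD, eN, eZ, eMdN, edMN, eMd, edM, e1, rk1A, rk1) /kd.

Lemma caseX k (i j : 'I_n) : (0 < k)%N ->
  qpb (Ham a k) (cfun (cX i j)) P = - k%:R * (X *m mxpow S k) i j.
Proof.
move=> hk.
set E : 'M[R]_n := delta_mx j i.
set A := E *m X - X *m E.
rewrite (@qpb_formula k (cX i j) (fun _ => (-2^-1) *: A) ((-2^-1) *: A + E *m X) hk).
- rewrite opprD addrA subrr add0r mulmxN trN mulmxA mxtrace_mulC mulmxA tr_Md.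
  by rewrite mulrN mulNr.
- move=> b _; rewrite /dFb /IWV -(LdF A (W b) (V b) (-2^-1) 0); congr (_ + _); congr (_ *m _).
  + apply/matrixP=> k' l; rewrite (ord1 l) /ptY /= mxE /brc /= /A /E.
    mnorm; ent; field; exact: h2.
  + apply/matrixP=> k' l; rewrite (ord1 k') /ptY /= mxE /brc /= /A /E.
    mnorm; ent; field; exact: h2.
- apply/matrixP=> k' l; rewrite /ptY /= mxE /brc /= /A /E.
  mnorm; ent; field; exact: h2.
Qed.


Lemma caseZ k (i j : 'I_n) : (0 < k)%N ->
  qpb (Ham a k) (cfun (cZ i j)) P
  = k%:R * ((mxpow S k *m Z) i j - (Z *m mxpow S k) i j).
Proof.
move=> hk.
set E : 'M[R]_n := delta_mx j i.
set A := E *m Z - Z *m E.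
rewrite (@qpb_formula k (cZ i j) (fun _ => (-2^-1) *: A) (2^-1 *: A) hk).
- have -> : (-2^-1) *: A - 2^-1 *: A = - A.
    rewrite -scalerBl (_ : -2^-1 - 2^-1 = -1 :> R) ?scaleN1r //; field; exact: h2.
  rewrite mulmxN trN /A mulmxBr trB !mulmxA tr_Md mxtrace_mulC mulmxA tr_Md.
  by rewrite opprB.
- move=> b _; rewrite /dFb /IWV -(LdF A (W b) (V b) (-2^-1) 0); congr (_ + _); congr (_ *m _).
  + apply/matrixP=> k' l; rewrite (ord1 l) /ptY /= mxE /brc /= /A /E.
    mnorm; ent; field; exact: h2.
  + apply/matrixP=> k' l; rewrite (ord1 k') /ptY /= mxE /brc /= /A /E.
    mnorm; ent; field; exact: h2.
- apply/matrixP=> k' l; rewrite /ptY /= mxE /brc /= /A /E.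
  mnorm; ent; field; exact: h2.
Qed.


Lemma kd_neq m (x y : 'I_m) : x != y -> kd x y = 0 :> R.
Proof. by rewrite /kd => /negbTE ->. Qed.
Lemma kd_eq m (x : 'I_m) : kd x x = 1 :> R.
Proof. by rewrite /kd eqxx. Qed.
Lemma osgn_lt (x y : 'I_d) : (x < y)%N -> osgn x y = 1 :> R.
Proof. by rewrite /osgn => ->. Qed.
Lemma osgn_gt (x y : 'I_d) : (y < x)%N -> osgn x y = -1 :> R.
Proof. by rewrite /osgn => h; rewrite ltnNge (ltnW h) /= h. Qed.
Lemma osgn_eq (x : 'I_d) : osgn x x = 0 :> R.
Proof. by rewrite /osgn ltnn. Qed.

Lemma caseV k (b0 : 'I_d) (j : 'I_n) : (0 < k)%N ->
  qpb (Ham a k) (cfun (cV b0 j)) P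
  = if (b0 <= a)%N then - k%:R * (V b0 *m mxpow S k) 0 j else 0.
Proof.
move=> hk.
set E : 'M[R]_n := delta_mx j 0 *m V b0.
rewrite (@qpb_formula k (cV b0 j) (fun m => if (m <= b0)%N then 2^-1 *: E else (-2^-1) *: E) (2^-1 *: E) hk).
- case: leqP => hab.
    rewrite -scalerBl (_ : -2^-1 - 2^-1 = -1 :> R) ?scaleN1r; last by field; exact: h2.
    by rewrite mulmxN trN /E !mulmxA mxtrace_mulC !mulmxA tr_Md mulrN mulNr.
  by rewrite subrr mulmx0 mxtrace0 mulr0.
- move=> b _; case: (ltngtP b b0) => hb.
  + idtac.
    rewrite /dFb /IWV -(LdF E (W b) (V b) (2^-1) (V b0 0 j)); congr (_ + _); congr (_ *m _).
    * apply/matrixP=> k' l; rewrite (ord1 l) /ptY /= mxE /brc /= /E.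
      rewrite kd_neq ?osgn_gt //; last by rewrite neq_ltn hb orbT.
      mnorm; ent; field; exact: h2.
    * apply/matrixP=> k' l; rewrite (ord1 k') /ptY /= mxE /brc /= /E.
      rewrite osgn_gt //.
      mnorm; ent; field; exact: h2.
  + idtac.
    rewrite /dFb /IWV -(LdF E (W b) (V b) (-2^-1) (V b0 0 j)); congr (_ + _); congr (_ *m _).
    * apply/matrixP=> k' l; rewrite (ord1 l) /ptY /= mxE /brc /= /E.
      rewrite kd_neq ?osgn_lt //; last by rewrite neq_ltn hb.
      mnorm; ent; field; exact: h2.
    * apply/matrixP=> k' l; rewrite (ord1 k') /ptY /= mxE /brc /= /E.
      rewrite osgn_lt //.
      mnorm; ent; field; exact: h2.
  + have eb : b = b0 by apply: val_inj.
    subst b.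
    apply/matrixP=> k' l; rewrite /dFb [LHS]eD !rk1 /ptY /= eCol eRow /brc /=.
    rewrite kd_eq osgn_eq /E /IWV.
    mnorm; ent; field; exact: h2.
- apply/matrixP=> k' l; rewrite leq0n /ptY /= mxE /brc /= /E.
  mnorm; ent; field; exact: h2.
Qed.


Lemma caseW k (b0 : 'I_d) (i : 'I_n) : (0 < k)%N ->
  qpb (Ham a k) (cfun (cW b0 i)) P
  = if (b0 <= a)%N then k%:R * (mxpow S k *m W b0) i 0 else 0.
Proof.
move=> hk.
set E : 'M[R]_n := W b0 *m delta_mx 0 i.
rewrite (@qpb_formula k (cW b0 i) (fun m => if (m <= b0)%N then (-2^-1) *: E else 2^-1 *: E) ((-2^-1) *: E) hk).
- case: leqP => hab.
    rewrite -scalerBl (_ : 2^-1 - - 2^-1 = 1 :> R) ?scale1r; last by field; exact: h2.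
    by rewrite /E mulmxA tr_Md.
  by rewrite subrr mulmx0 mxtrace0 mulr0.
- move=> b _; case: (ltngtP b b0) => hb.
  + rewrite /dFb /IWV -(LdF E (W b) (V b) (-2^-1) (W b0 i 0)); congr (_ + _); congr (_ *m _).
    * apply/matrixP=> k' l; rewrite (ord1 l) /ptY /= mxE /brc /= /E.
      rewrite osgn_gt //.
      mnorm; ent; field; exact: h2.
    * apply/matrixP=> k' l; rewrite (ord1 k') /ptY /= mxE /brc /= /E.
      rewrite kd_neq ?osgn_lt //; last by rewrite neq_ltn hb.
      mnorm; ent; field; exact: h2.
  + rewrite /dFb /IWV -(LdF E (W b) (V b) (2^-1) (W b0 i 0)); congr (_ + _); congr (_ *m _).
    * apply/matrixP=> k' l; rewrite (ord1 l) /ptY /= mxE /brc /= /E.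
      rewrite osgn_lt //.
      mnorm; ent; field; exact: h2.
    * apply/matrixP=> k' l; rewrite (ord1 k') /ptY /= mxE /brc /= /E.
      rewrite kd_neq ?osgn_gt //; last by rewrite neq_ltn hb orbT.
      mnorm; ent; field; exact: h2.
  + have eb : b = b0 by apply: val_inj.
    subst b.
    apply/matrixP=> k' l; rewrite /dFb [LHS]eD !rk1 /ptY /= eCol eRow /brc /=.
    rewrite kd_eq osgn_eq /E /IWV.
    mnorm; ent; field; exact: h2.
- apply/matrixP=> k' l; rewrite leq0n /ptY /= mxE /brc /= /E.
  mnorm; ent; field; exact: h2.
Qed.


Lemma caseS k (i j : 'I_n) : (0 < k)%N -> qpb (Ham a k) (Sentry a i j) P = 0.
Proof.
move=> hk; rewrite qpb_Ham_S.
set K := k%:R *: mxpow S k.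
rewrite (@DS_formula _ (fun _ => K) K).
- by rewrite /K -scalemxAl -scalemxAr mxpow_comm subrr mxE.
- move=> b hb; rewrite /dFb /IWV -(LdF (mxpow S k) (W b) (V b) k%:R 0); congr (_ + _); congr (_ *m _).
  + apply/matrixP=> r l; rewrite (ord1 l) /ptY /= mxE caseW // hb.
    rewrite !(eD, eZ); ring.
  + apply/matrixP=> r l; rewrite (ord1 r) /ptY /= mxE caseV // hb.
    rewrite !(eD, eZ); ring.
- apply/matrixP=> r l; rewrite /ptY /= mxE caseZ // /K -scalemxAl -scalemxAr.
  rewrite !(eD, eN, eZ); ring.
Qed.

End Main.

Unset Implicit Arguments.
Theorem mainTheorem15 (R : numClosedFieldType) (n d : nat) (q : R)
  (hn : (0 < n)%N) (hd : (0 < d)%N)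
  (hq : q != 0) (hqroot : forall m : nat, (0 < m)%N -> q ^+ m != 1)
  (P : pt R n d) (hP : in_Mx q P) (a : 'I_d) (k : nat) (hk : (0 < k)%N) :
  let H := @Ham n d a k in
  let Sk := mxpow (Smx P a) k in
  [/\ \matrix_(i, j) qpb H (cfun (cX i j)) P = - k%:R *: (pX P *m Sk),
      \matrix_(i, j) qpb H (cfun (cZ i j)) P
        = k%:R *: (Sk *m pZ P - pZ P *m Sk),
      forall b : 'I_d, \row_j qpb H (cfun (cV b j)) P
        = if (b <= a)%N then - k%:R *: (pV P b *m Sk) else 0,
      forall b : 'I_d, \col_i qpb H (cfun (cW b i)) P
        = if (b <= a)%N then k%:R *: (Sk *m pW P b) else 0
    & \matrix_(i, j) qpb H (Sentry a i j) P = 0 ].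
Proof.
have h2 : (2%:R : R) != 0 by rewrite pnatr_eq0.
move=> H Sk; rewrite /H /Sk; split.
- by apply/matrixP=> i j; rewrite [LHS]mxE caseX // eZ.
- by apply/matrixP=> i j; rewrite [LHS]mxE caseZ // eZ eD eN.
- move=> b; apply/matrixP=> r j; rewrite (ord1 r) [LHS]mxE caseV //.
  by case: ifP => _; rewrite ?eZ ?mxE.
- move=> b; apply/matrixP=> i r; rewrite (ord1 r) [LHS]mxE caseW //.
  by case: ifP => _; rewrite ?eZ ?mxE.
- by apply/matrixP=> i j; rewrite [LHS]mxE caseS // mxE.
Qed.
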